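(* Let $k\ge1$. Assume that $R_0,\dots,R_k$ (from BCG) have full column rank, that $\mu$ is not an eigenvalue of $T_1,\dots,T_k$, and that $\Delta^{(\mu)}_1,\dots,\Delta^{(\mu)}_{k+1}$ are nonsingular. Define $\Upsilon^{(\mu)}_j=\Phi_j^{-1}(\Delta^{(\mu)}_{j+1})^{-1}\Phi_j$ and $\Theta^{(\mu)}_j=(R_j^TR_j)\Upsilon^{(\mu)}_j$ for $j=0,\dots,k$. Then $\Upsilon^{(\mu)}_0=\mu^{-1}I_m$ and $$\Upsilon^{(\mu)}_k=\big[\mu(\Upsilon^{(\mu)}_{k-1}-\Upsilon_{k-1})+\Xi_k\big]^{-1}(\Upsilon^{(\mu)}_{k-1}-\Upsilon_{k-1}) =\big[\mu(\Theta^{(\mu)}_{k-1}-\Theta_{k-1})+R_k^TR_k\big]^{-1}(\Theta^{(\mu)}_{k-1}-\Theta_{k-1}),$$ where all displayed inverses exist.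
   Context: Let $A\in\mathbb{R}^{n\times n}$ be symmetric positive definite, let $B,X_0\in\mathbb{R}^{n\times m}$, and let $X=A^{-1}B$. The block conjugate gradient (BCG) algorithm sets $R_0=B-AX_0$, $P_0=R_0$, and for $k=1,2,\dots$: $\Upsilon_{k-1}=(P_{k-1}^TAP_{k-1})^{-1}(R_{k-1}^TR_{k-1})$, $X_k=X_{k-1}+P_{k-1}\Upsilon_{k-1}$, $R_k=R_{k-1}-AP_{k-1}\Upsilon_{k-1}$, $\Xi_k=(R_{k-1}^TR_{k-1})^{-1}(R_k^TR_k)$, $P_k=R_k+P_{k-1}\Xi_k$. Define $\mathfrak{E}_k=(X-X_k)^TA(X-X_k)$ and $\Theta_k=(R_k^TR_k)\Upsilon_k$. The block Lanczos algorithm below is started from the same $R_0=B-AX_0$. Let $A\in\mathbb{R}^{n\times n}$ be symmetric positive definite and $R_0\in\mathbb{R}^{n\times m}$ of full column rank. The block Lanczos algorithm started from $R_0$ is: $V_0=0$; $V_1\Gamma_0=R_0$ is a QR factorization ($V_1\in\mathbb{R}^{n\times m}$ with orthonormal columns, $\Gamma_0\in\mathbb{R}^{m\times m}$ upper triangular); for $k=1,2,\dots$: $W=AV_k-V_{k-1}\Gamma_{k-1}^T$, $\Omega_k=V_k^TW$, and $V_{k+1}\Gamma_k=W-V_k\Omega_k$ is a QR factorization. It is assumed that for all indices considered the block Krylov subspace $\mathrm{colspan}\{R_0,AR_0,\dots,A^{j-1}R_0\}$ has dimension $jm$, so that every $\Gamma_j$ is nonsingular and $V_i^TV_j=\delta_{ij}I_m$.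 Put $\mathcal V_k=(V_1,\dots,V_k)\in\mathbb{R}^{n\times km}$ and let $T_k\in\mathbb{R}^{km\times km}$ be the symmetric block tridiagonal matrix with diagonal blocks $\Omega_1,\dots,\Omega_k$, subdiagonal blocks $\Gamma_1,\dots,\Gamma_{k-1}$ and superdiagonal blocks $\Gamma_1^T,\dots,\Gamma_{k-1}^T$; one has $A\mathcal V_k=\mathcal V_kT_k+V_{k+1}\Gamma_kE_k^T$ and $T_k=\mathcal V_k^TA\mathcal V_k$ is symmetric positive definite. Define $\Delta_1=\Omega_1$, $\Delta_j=\Omega_j-\Gamma_{j-1}\Delta_{j-1}^{-1}\Gamma_{j-1}^T$ ($j\ge2$) (the diagonal blocks of the block $LDL^T$-type factorization of $T_k$; they are symmetric positive definite), $\Pi_j=\Gamma_j\Delta_j^{-1}$, $\Phi_0=\Gamma_0$ and $\Phi_j=\Pi_j\Phi_{j-1}$. Let $E_j=e_j\otimes I_m\in\mathbb{R}^{km\times m}$; for $M\in\mathbb{R}^{km\times km}$, $[M]_{i,j}$ denotes its $(i,j)$ block of size $m\times m$, and for $Y\in\mathbb{R}^{km\times m}$, $[Y]_j$ denotes its $j$th $m\times m$ block. Shifted quantities: for $\mu\in\mathbb{R}$ let $\overline\Delta^{(\mu)}_1=\Omega_1-\mu I_m$ and $\overline\Delta^{(\mu)}_{j+1}=\Omega_{j+1}-\mu I_m-\Gamma_j(\overline\Delta^{(\mu)}_j)^{-1}\Gamma_j^T$ (the diagonal blocks of the analogous factorization of $T_k-\mu I$). For $k\ge1$ let $\Omega^{(\mu)}_{k+1}=\mu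 I_m+\Gamma_k[(T_k-\mu I)^{-1}]_{k,k}\Gamma_k^T$ and let $T^{(\mu)}_{k+1}$ be $T_{k+1}$ with its last diagonal block $\Omega_{k+1}$ replaced by $\Omega^{(\mu)}_{k+1}$. Put $\Delta^{(\mu)}_1=\mu I_m$ and, for $k\ge1$, $\Delta^{(\mu)}_{k+1}=\Omega^{(\mu)}_{k+1}-\Gamma_k\Delta_k^{-1}\Gamma_k^T$ (the last diagonal block of the factorization of $T^{(\mu)}_{k+1}$). *)

(* Defs.v *)
From HB Require Import structures.
From mathcomp Require Import all_boot all_order all_algebra.
Set Implicit Arguments. Unset Strict Implicit. Unset Printing Implicit Defensive.
Import Order.TTheory GRing.Theory Num.Theory.
Local Open Scope ring_scope.

Section BCG_Lanczos.
Variable R : realFieldType.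
Variables n m : nat.

Definition sym_posdef (A : 'M[R]_n) : Prop :=
  A^T = A /\ forall x : 'cV[R]_n, x != 0 -> 0 < (x^T *m A *m x) ord0 ord0.

Definition upper_trig (G : 'M[R]_m) : bool := is_trig_mx G^T.

Variables (A : 'M[R]_n) (B X0 : 'M[R]_(n, m)).

Fixpoint bcg (k : nat) : 'M[R]_(n, m) * 'M[R]_(n, m) * 'M[R]_(n, m) :=
  match k with
  | 0 => (X0, B - A *m X0, B - A *m X0)
  | k'.+1 =>
    let: (X, Rk, P) := bcg k' in
    let Ups := invmx (P^T *m A *m P) *m (Rk^T *m Rk) in
    let X' := X + P *m Ups in
    let R' := Rk - A *m P *m Ups in
    let Xi := invmx (Rk^T *m Rk) *m (R'^T *m R') in
    (X', R', R' + P *m Xi)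
  end.

Definition bcgX k := (bcg k).1.1.
Definition bcgR k := (bcg k).1.2.
Definition bcgP k := (bcg k).2.
Definition bcgUps k := invmx ((bcgP k)^T *m A *m bcgP k) *m ((bcgR k)^T *m bcgR k).
(* Xi_k = (R_{k-1}^T R_{k-1})^{-1} (R_k^T R_k), for k >= 1 *)
Definition bcgXi k :=
  invmx ((bcgR k.-1)^T *m bcgR k.-1) *m ((bcgR k)^T *m bcgR k).
Definition bcgTheta k := ((bcgR k)^T *m bcgR k) *m bcgUps k.

Definition krylov (R0 : 'M[R]_(n, m)) (j : nat) :=
  \mxrow_(p < j) (A ^+ p *m R0).

Variables (V : nat -> 'M[R]_(n, m)) (Gam Om : nat -> 'M[R]_m).

(* the Lanczos relations started from R0, for the steps 1..k (QR factors
   Gam 0 .. Gam k, blocks V 1 .. V (k+1), Om 1 .. Om k) *)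
Definition lanczos_upto (R0 : 'M[R]_(n, m)) (k : nat) : Prop :=
  [/\ V 0 = 0,
      V 1 *m Gam 0 = R0, (V 1)^T *m V 1 = 1%:M, upper_trig (Gam 0) &
      forall j, (1 <= j <= k)%N ->
        let W := A *m V j - V j.-1 *m (Gam j.-1)^T in
        [/\ Om j = (V j)^T *m W,
            V j.+1 *m Gam j = W - V j *m Om j,
            (V j.+1)^T *m V j.+1 = 1%:M & upper_trig (Gam j)]].

(* block (i,j) (0-based) of T_k *)
Definition Tblk (i j : nat) : 'M[R]_m :=
  if i == j then Om i.+1
  else if i == j.+1 then Gam i
  else if j == i.+1 then (Gam j)^T
  else 0.

Definition Tk (k : nat) : 'M[R]_(\sum_(i < k) m) :=
  \mxblock_(i < k, j < k) Tblk i j.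

(* Delta_j, j >= 1 (Delta 0 is an unused dummy) *)
Fixpoint Delta (j : nat) : 'M[R]_m :=
  match j with
  | 0 => 0
  | j'.+1 => if j' is 0 then Om 1
             else Om j - Gam j' *m invmx (Delta j') *m (Gam j')^T
  end.

Fixpoint Phi (j : nat) : 'M[R]_m :=
  match j with
  | 0 => Gam 0
  | j'.+1 => Gam j *m invmx (Delta j) *m Phi j'
  end.

Variable mu : R.

(* Omega^{(mu)}_{k+1} for k = k'.+1 >= 1 :
   mu I + Gamma_k [(T_k - mu I)^{-1}]_{k,k} Gamma_k^T *)
Definition OmMu (k' : nat) : 'M[R]_m :=
  mu%:M + Gam k'.+1 *m
    submxblock (invmx (Tk k'.+1 - mu%:M)) ord_max ord_max *m (Gam k'.+1)^T.

Definition DeltaMu (j : nat) : 'M[R]_m :=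
  match j with
  | 0 => 0
  | 1 => mu%:M
  | k'.+2 => OmMu k' - Gam k'.+1 *m invmx (Delta k'.+1) *m (Gam k'.+1)^T
  end.

Definition UpsMu (j : nat) : 'M[R]_m :=
  invmx (Phi j) *m invmx (DeltaMu j.+1) *m Phi j.

Definition ThetaMu (j : nat) : 'M[R]_m :=
  ((bcgR j)^T *m bcgR j) *m UpsMu j.

End BCG_Lanczos.

(* Main.v *)
Require Import Defs.
From HB Require Import structures.
From mathcomp Require Import all_boot all_order all_algebra.
Import Order.TTheory GRing.Theory Num.Theory.
Local Open Scope ring_scope.
Set Implicit Arguments. Unset Strict Implicit. Unset Printing Implicit Defensive.

Lemma trD (R : ringType) p q (a b : 'M[R]_(p, q)) : (a + b)^T = a^T + b^T.
Proof. exact: linearD. Qed.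
Lemma trB (R : ringType) p q (a b : 'M[R]_(p, q)) : (a - b)^T = a^T - b^T.
Proof. exact: linearB. Qed.
Lemma trN (R : ringType) p q (a : 'M[R]_(p, q)) : (- a)^T = - a^T.
Proof. exact: linearN. Qed.
Lemma trZ (R : ringType) p q c (a : 'M[R]_(p, q)) : (c *: a)^T = c *: a^T.
Proof. exact: linearZ. Qed.

Lemma pd_unit (R : realFieldType) n m (A : 'M[R]_n)
  (Apd : forall x : 'cV_n, x != 0 -> 0 < (x^T *m A *m x) ord0 ord0)
  (Qm Vm : 'M[R]_(n, m)) : Qm^T *m Vm = 1%:M -> Qm^T *m A *m Qm \in unitmx.
Proof.
move=> QV; rewrite -row_free_unit -kermx_eq0; apply/negP => /negP nz.
have [x /sub_kermxP xD xnz] := rowV0Pn nz.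
pose y := Qm *m x^T.
have VQ : Vm^T *m Qm = 1%:M by rewrite -[Vm^T *m Qm]trmxK trmx_mul trmxK QV trmx1.
have ynz : y != 0.
  apply: contra xnz => /eqP y0; apply/eqP.
  by rewrite -[x]trmxK -[x^T]mul1mx -VQ -mulmxA -/y y0 mulmx0 trmx0.
have := Apd y ynz.
rewrite /y trmx_mul trmxK.
rewrite mulmxA -(mulmxA x) -(mulmxA x) xD mul0mx mxE.
by rewrite ltxx.
Qed.

Lemma inv_uniq (R : comUnitRingType) p (X Y : 'M[R]_p) : X *m Y = 1%:M -> invmx X = Y.
Proof.
move=> XY; have [uX _] := mulmx1_unit XY.
by rewrite -[invmx X]mulmx1 -XY mulmxA mulVmx // mul1mx.
Qed.

Lemma invmxM (R : comUnitRingType) p (X Y : 'M[R]_p) : X \in unitmx -> Y \in unitmx ->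
  invmx (X *m Y) = invmx Y *m invmx X.
Proof.
move=> uX uY; apply: inv_uniq.
by rewrite mulmxA -(mulmxA X) mulmxV // mulmx1 mulmxV.
Qed.

Section Lz.
Variable R : realFieldType.
Variables n m k : nat.
Variable A : 'M[R]_n.
Variables B X0 : 'M[R]_(n, m).
Variable V : nat -> 'M[R]_(n, m).
Variables Gam Om : nat -> 'M[R]_m.
Hypothesis Asym : A^T = A.
Hypothesis Apd : forall x : 'cV_n, x != 0 -> 0 < (x^T *m A *m x) ord0 ord0.
Hypothesis Hrank : forall j, (j <= k)%N -> \rank (bcgR A B X0 j) = m.
Hypothesis LZ : lanczos_upto A V Gam Om (bcgR A B X0 0) k.

Lemma V0 : V 0 = 0. Proof. by case: LZ. Qed.
Lemma V1G0 : V 1 *m Gam 0 = bcgR A B X0 0. Proof. by case: LZ. Qed.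
Lemma V1n : (V 1)^T *m V 1 = 1%:M. Proof. by case: LZ. Qed.

Lemma lz_Om j : (1 <= j <= k)%N ->
  Om j = (V j)^T *m (A *m V j - V j.-1 *m (Gam j.-1)^T).
Proof. by case: LZ => _ _ _ _ H /H []. Qed.
Lemma lz_AV j : (1 <= j <= k)%N ->
  A *m V j = V j.+1 *m Gam j + V j *m Om j + V j.-1 *m (Gam j.-1)^T.
Proof.
case: LZ => _ _ _ _ H /H [] _ -> _ _.
by rewrite !subrK.
Qed.
Lemma lz_norm j : (1 <= j <= k)%N -> (V j.+1)^T *m V j.+1 = 1%:M.
Proof. by case: LZ => _ _ _ _ H /H []. Qed.

Definition orth (J : nat) := forall a b, (1 <= a <= J)%N -> (1 <= b <= J)%N ->
  (V a)^T *m V b = if a == b then 1%:M else 0.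

Lemma orth_mono J J' : (J' <= J)%N -> orth J -> orth J'.
Proof.
move=> le o a b /andP[a1 aJ] /andP[b1 bJ]; apply: o; apply/andP; split => //;
 exact: leq_trans le.
Qed.

Lemma orth1 : orth 1.
Proof.
move=> a b /andP[a1 aJ] /andP[b1 bJ].
have -> : a = 1%N by apply/eqP; rewrite eqn_leq a1 aJ.
have -> : b = 1%N by apply/eqP; rewrite eqn_leq b1 bJ.
by rewrite V1n.
Qed.

Lemma orth_ij J i j : orth J -> (i <= J)%N -> (j <= J)%N -> i != j ->
  (V i)^T *m V j = 0.
Proof.
move=> o iJ jJ ij.
case: i iJ ij => [|i] iJ ij; first by rewrite V0 trmx0 mul0mx.
case: j jJ ij => [|j] jJ ij; first by rewrite V0 mulmx0.
by rewrite o ?(negPf ij) //; apply/andP.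
Qed.

Lemma orth_step j : (1 <= j <= k)%N -> orth j -> Gam j \in unitmx -> orth j.+1.
Proof.
move=> /andP[j1 jk] o uG.
have key : forall i, (1 <= i <= j)%N -> (V i)^T *m V j.+1 = 0.
  move=> i /andP[i1 ij].
  suff : (V i)^T *m V j.+1 *m Gam j = 0.
    by move=> H; rewrite -(mulmxK uG ((V i)^T *m V j.+1)) H mul0mx.
  have e : V j.+1 *m Gam j = A *m V j - V j *m Om j - V j.-1 *m (Gam j.-1)^T.
    by rewrite lz_AV ?j1 // addrAC addrK addrK.
  rewrite -mulmxA e !mulmxBr.
  have [->|ne] := eqVneq i j.
    rewrite [in X in _ - X - _]mulmxA o ?eqxx ?j1 ?leqnn // mul1mx.
    rewrite (lz_Om (j:=j)) ?j1 // mulmxBr.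
    by rewrite subKr subrr.
  have ilt : (i < j)%N by rewrite ltn_neqAle ne ij.
  have -> : (V i)^T *m (A *m V j) = (A *m V i)^T *m V j.
    by rewrite trmx_mul Asym mulmxA.
  have h1 : (V i)^T *m V j = 0 by apply: (orth_ij o) => //; exact: ltnW.
  have h2 : (V i.-1)^T *m V j = 0.
    apply: (orth_ij o) => //; first by rewrite (leq_trans (leq_pred _) (ltnW ilt)).
    by rewrite neq_ltn (leq_ltn_trans (leq_pred _) ilt).
  have h4 : (V i.+1)^T *m V j = if i.+1 == j then 1%:M else 0.
    case: eqP => [<-|/eqP ne']; first by rewrite o ?leqnn ?eqxx.
    exact: (orth_ij o).
  have h3 : (V i)^T *m V j.-1 = if i.+1 == j then 1%:M else 0.
    case: eqP => [<-|/eqP ne']; first by rewrite o ?leqnn ?eqxx // i1.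
    apply: (orth_ij o) => //; first by rewrite (leq_trans (leq_pred _)).
    by apply: contra ne' => /eqP ->; rewrite prednK // (leq_ltn_trans _ ilt).
  rewrite lz_AV ?i1 ?(leq_trans ij jk) //.
  rewrite !trD !trmx_mul !mulmxDl -!mulmxA h1 h2 h4 !mulmx0 addr0 addr0.
  rewrite [(V i)^T *m (V j.-1 *m _)]mulmxA [(V i)^T *m (V j *m _)]mulmxA h1 h3 mul0mx subr0.
  case: eqP => [ej|_]; last by rewrite mulmx0 mul0mx subrr.
  by rewrite -ej /= mulmx1 mul1mx subrr.
move=> a b /andP[a1 aJ] /andP[b1 bJ].
have [ea|na] := eqVneq a j.+1; have [eb|nb] := eqVneq b j.+1.
- by subst; rewrite eqxx lz_norm ?j1.
- subst a; rewrite (negPf (_ : j.+1 != b)) 1?eq_sym //.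
  rewrite -[LHS]trmxK trmx_mul trmxK key ?trmx0 //.
  by rewrite b1 -ltnS ltn_neqAle nb bJ.
- subst b; rewrite (negPf na) key //.
  by rewrite a1 -ltnS ltn_neqAle na aJ.
- apply: o; apply/andP; split => //; rewrite -ltnS ltn_neqAle ?na ?nb //.
Qed.

Local Notation Dl := (Delta Gam Om).
Local Notation Ph := (Phi Gam Om).

Lemma DeltaS j : Dl j.+2 = Om j.+2 - Gam j.+1 *m invmx (Dl j.+1) *m (Gam j.+1)^T.
Proof. by []. Qed.
Lemma Delta1 : Dl 1 = Om 1. Proof. by []. Qed.

Lemma Om_sym j : (1 <= j <= k)%N -> orth j -> (Om j)^T = Om j.
Proof.
move=> /andP[j1 jk] o.
rewrite lz_Om ?j1 // mulmxBr [(V j)^T *m (V j.-1 *m _)]mulmxA (orth_ij o) ?leq_pred //; last first.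
  by rewrite eq_sym neq_ltn ltn_predL j1.
by rewrite mul0mx subr0 trmx_mul trmx_mul Asym trmxK mulmxA.
Qed.

Lemma Delta_sym j : (forall i, (1 <= i <= j)%N -> (Om i)^T = Om i) -> (Dl j)^T = Dl j.
Proof.
elim: j => [|j IH] H; first by rewrite /= trmx0.
case: j IH H => [|j] IH H; first by rewrite /= H.
rewrite DeltaS trB H; last by rewrite leqnn.
rewrite !trmx_mul trmxK trmx_inv IH ?mulmxA //.
move=> i /andP[i1 ij]; apply: H; rewrite i1 /=; exact: leqW.
Qed.

Fixpoint Q j : 'M[R]_(n, m) :=
  if j is j'.+1 then V j - Q j' *m (Gam j' *m invmx (Dl j'))^T else 0.

Lemma Q_orth J : orth J -> forall j l, (1 <= j <= l)%N -> (l <= J)%N ->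
  (Q j)^T *m V l = if j == l then 1%:M else 0.
Proof.
move=> o; elim=> [|j IH] l // /andP[_ jl] lJ.
rewrite /= trB trmx_mul trmxK mulmxBl o ?(leq_trans jl) //; last first.
  by rewrite (leq_trans _ jl).
case: j IH jl => [|j] IH jl; first by rewrite /= trmx0 mulmx0 mul0mx subr0.
rewrite -mulmxA IH ?(ltnW jl) //.
by rewrite (ltn_eqF jl) mulmx0 subr0.
Qed.

Definition DSU j := (forall i, (1 <= i < j)%N -> (Dl i)^T = Dl i /\ Dl i \in unitmx).

Lemma QS j : Q j.+1 = V j.+1 - Q j *m (Gam j *m invmx (Dl j))^T.
Proof. by []. Qed.

Lemma Q1 : Q 1 = V 1.
Proof. by rewrite /= mul0mx subr0. Qed.

Lemma AQ j : (1 <= j <= k)%N -> DSU j -> A *m Q j = V j *m Dl j + V j.+1 *m Gam j.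
Proof.
elim: j => [|j IH] // /andP[_ jk] H.
case: j IH jk H => [|j] IH jk H.
  by rewrite Q1 lz_AV // V0 mul0mx addr0 addrC.
rewrite QS mulmxBr mulmxA IH ?(ltnW jk) //; last first.
  by move=> i /andP[i1 ij]; apply: H; rewrite i1 ltnW.
have [sD uD] := H j.+1 (leqnn _).
rewrite trmx_mul trmx_inv sD mulmxDl -!mulmxA mulKVmx //.
rewrite (lz_AV (j:=j.+2)) // DeltaS mulmxBr !mulmxA.
rewrite [j.+2.-1]/= opprD addrA addrK.
by rewrite [RHS]addrC addrA.
Qed.

Lemma QAQ j : (1 <= j <= k)%N -> orth j -> DSU j -> (Q j)^T *m A *m Q j = Dl j.
Proof.
move=> /andP[j1 jk] o H.
case: j j1 jk o H => [|[|j]] // _ jk o H.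
  by rewrite Q1 -mulmxA /= (lz_Om (j:=1)) // V0 mul0mx subr0.
have [sD uD] := H j.+1 (leqnn _).
have eQ : Q j.+2 = V j.+2 - Q j.+1 *m (invmx (Dl j.+1) *m (Gam j.+1)^T).
  by rewrite QS trmx_mul trmx_inv sD.
have H1 : DSU j.+1.
  by move=> i /andP[a b]; apply: H; rewrite a (ltn_trans b).
have AQ1 := AQ (j:=j.+1) (ltnW jk) H1.
have QV : (Q j.+2)^T *m V j.+2 = 1%:M by rewrite (Q_orth o) ?eqxx ?leqnn.
have QW : (Q j.+1)^T *m (A *m V j.+2 - V j.+1 *m (Gam j.+1)^T) = 0.
  rewrite mulmxBr mulmxA (_ : (Q j.+1)^T *m A = (A *m Q j.+1)^T); last first.
    by rewrite trmx_mul Asym.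
  rewrite AQ1 trD !trmx_mul mulmxDl -!mulmxA (orth_ij o (i:=j.+1) (j:=j.+2)) //; last first.
    by rewrite ltn_eqF.
  rewrite mulmx0 add0r o ?leqnn ?eqxx // mulmx1 mulmxA (Q_orth o) ?eqxx ?leqnn //.
  by rewrite mul1mx subrr.
rewrite -mulmxA {2}eQ mulmxBr mulmxA AQ1 mulmxDl -!mulmxA mulKVmx //.
rewrite [X in _ - X]addrC opprD addrA.
rewrite addrAC mulmxBr {1}eQ trB mulmxBl -(lz_Om (j:=j.+2)) //.
rewrite (trmx_mul (Q j.+1)) -mulmxA QW mulmx0 subr0.
by rewrite mulmxA QV mul1mx DeltaS !mulmxA.
Qed.


Local Notation Rb := (bcgR A B X0).
Local Notation Pb := (bcgP A B X0).
Local Notation Ub := (bcgUps A B X0).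
Local Notation Xb := (bcgXi A B X0).

Lemma bcgR_S j : Rb j.+1 = Rb j - A *m Pb j *m Ub j.
Proof. by rewrite /bcgUps /bcgXi /bcgR /bcgP /=; case: (bcg A B X0 j) => [[X Rk] P]. Qed.
Lemma bcgP_S j : Pb j.+1 = Rb j.+1 + Pb j *m Xb j.+1.
Proof. by rewrite /bcgUps /bcgXi /bcgR /bcgP /=; case: (bcg A B X0 j) => [[X Rk] P]. Qed.
Lemma PhiS j : Ph j.+1 = Gam j.+1 *m invmx (Dl j.+1) *m Ph j.
Proof. by []. Qed.

Lemma sgn_tr (s : R) p q r (M : 'M[R]_(p, q)) (N : 'M[R]_(p, r)) : s * s = 1 ->
  (s *: M)^T *m (s *: N) = M^T *m N.
Proof. by move=> ss; rewrite trZ -scalemxAl -scalemxAr scalerA ss scale1r. Qed.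

Lemma bcg_step j (s : R) : s * s = 1 ->
  Rb j = s *: (V j.+1 *m Ph j) -> Pb j = s *: (Q j.+1 *m Ph j) ->
  Ph j \in unitmx -> Dl j.+1 \in unitmx ->
  (Q j.+1)^T *m A *m Q j.+1 = Dl j.+1 ->
  (V j.+1)^T *m V j.+1 = 1%:M -> (V j.+2)^T *m V j.+2 = 1%:M ->
  A *m Q j.+1 = V j.+1 *m Dl j.+1 + V j.+2 *m Gam j.+1 ->
  [/\ Ub j = invmx (Ph j) *m invmx (Dl j.+1) *m Ph j,
      Rb j.+1 = (- s) *: (V j.+2 *m Ph j.+1),
      Pb j.+1 = (- s) *: (Q j.+2 *m Ph j.+1) &
      Xb j.+1 = invmx ((Ph j)^T *m Ph j) *m ((Ph j.+1)^T *m Ph j.+1)].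
Proof.
move=> ss eR eP uF uD QAQ1 VV1 VV2 AQ1.
have ss' : (- s) * (- s) = 1 by rewrite mulrNN.
have RR : (Rb j)^T *m Rb j = (Ph j)^T *m Ph j.
  by rewrite eR sgn_tr // trmx_mul -mulmxA (mulmxA (V j.+1)^T) VV1 mul1mx.
have uFt : (Ph j)^T \in unitmx by rewrite unitmx_tr.
have eU : Ub j = invmx (Ph j) *m invmx (Dl j.+1) *m Ph j.
  have PAP : (Pb j)^T *m A *m Pb j = (Ph j)^T *m Dl j.+1 *m Ph j.
    rewrite eP trZ -scalemxAl -scalemxAl -scalemxAr scalerA ss scale1r.
    by rewrite trmx_mul -QAQ1 !mulmxA.
  rewrite /bcgUps RR PAP.
  rewrite invmxM ?unitmx_mul ?uFt ?uD // invmxM // !mulmxA.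
  by rewrite -(mulmxA _ (invmx (Ph j)^T)) mulVmx // mulmx1.
have eR1 : Rb j.+1 = (- s) *: (V j.+2 *m Ph j.+1).
  rewrite bcgR_S eU eR eP -!scalemxAr -scalemxAl.
  rewrite (_ : A *m (Q j.+1 *m Ph j) *m (invmx (Ph j) *m invmx (Dl j.+1) *m Ph j)
     = A *m Q j.+1 *m invmx (Dl j.+1) *m Ph j); last first.
    by rewrite !mulmxA mulmxK.
  rewrite AQ1 mulmxDl mulmxDl mulmxK // PhiS !mulmxA.
  by rewrite scalerDr opprD addrA subrr sub0r scaleNr.
have XX : Xb j.+1 = invmx ((Ph j)^T *m Ph j) *m ((Ph j.+1)^T *m Ph j.+1).
  rewrite /bcgXi -pred_Sn RR eR1 sgn_tr // trmx_mul -mulmxA (mulmxA (V j.+2)^T) VV2.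
  by rewrite mul1mx.
split => //.
rewrite bcgP_S XX eR1 eP -scalemxAl invmxM // (QS j.+1).
rewrite [X in _ + _ *: X](_ : _ = Q j.+1 *m (Gam j.+1 *m invmx (Dl j.+1))^T *m Ph j.+1); last first.
  rewrite !mulmxA (mulmxK uF) [in (Ph j.+1)^T]PhiS (trmx_mul _ (Ph j)).
  by rewrite !mulmxA (mulmxKV uFt).
move: (Q j.+1 *m (Gam j.+1 *m invmx (Dl j.+1))^T) => Y.
by rewrite mulmxBl scalerBr !scaleNr opprK.
Qed.

Lemma rank_unit j (s : R) (M : 'M[R]_(n, m)) (F : 'M[R]_m) : (j <= k)%N ->
  Rb j = s *: (M *m F) -> F \in unitmx.
Proof.
move=> jk eR; rewrite -row_free_unit /row_free eqn_leq rank_leq_row /=.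
rewrite -{1}(Hrank jk) eR (leq_trans (mxrank_scale _ _)) //.
exact: mxrankM_maxr.
Qed.

Lemma sgn2 j : (-1) ^+ j * (-1) ^+ j = 1 :> R.
Proof. by rewrite -exprD addnn -mul2n exprM sqrrN expr1n expr1n. Qed.

Definition Inv j := [/\ orth j.+1,
   forall i, (1 <= i <= j)%N -> (Dl i)^T = Dl i /\ Dl i \in unitmx,
   forall i, (i <= j)%N -> Gam i \in unitmx,
   Rb j = (-1)^+j *: (V j.+1 *m Ph j) &
   Pb j = (-1)^+j *: (Q j.+1 *m Ph j)].

Lemma Rb0 : Rb 0 = (-1)^+0 *: (V 1 *m Ph 0).
Proof. by rewrite expr0 scale1r V1G0. Qed.

Lemma Inv0 : Inv 0.
Proof.
split.
- exact: orth1.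
- by move=> i /andP[a b]; move: (leq_trans a b).
- by move=> i; rewrite leqn0 => /eqP ->; apply: (rank_unit (j:=0)) Rb0.
- exact: Rb0.
- by rewrite Q1 -Rb0.
Qed.

Lemma Inv_step j : (j < k)%N -> Inv j -> Inv j.+1 /\
  [/\ Ub j = invmx (Ph j) *m invmx (Dl j.+1) *m Ph j,
      Xb j.+1 = invmx ((Ph j)^T *m Ph j) *m ((Ph j.+1)^T *m Ph j.+1) &
      Ph j \in unitmx].
Proof.
move=> jk [o HD HG eR eP].
have jk' : (1 <= j.+1 <= k)%N by [].
have DS : DSU j.+1 by move=> i /andP[i1 ij]; apply: HD; rewrite i1.
have OS : forall i, (1 <= i <= j.+1)%N -> (Om i)^T = Om i.
  move=> i /andP[i1 ij]; apply: Om_sym; first by rewrite i1 (leq_trans ij).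
  exact: (orth_mono ij o).
have sD := Delta_sym OS.
have QAQ1 := QAQ jk' o DS.
have QV : (Q j.+1)^T *m V j.+1 = 1%:M by rewrite (Q_orth o) ?eqxx ?leqnn.
have uD : Dl j.+1 \in unitmx by rewrite -QAQ1; exact: pd_unit QV.
have AQ1 := AQ jk' DS.
have uF : Ph j \in unitmx by apply: (rank_unit (ltnW jk)) eR.
have VV1 : (V j.+1)^T *m V j.+1 = 1%:M by rewrite o ?eqxx ?leqnn.
have VV2 := lz_norm jk'.
have [eU eR1 eP1 eX] := bcg_step (sgn2 j) eR eP uF uD QAQ1 VV1 VV2 AQ1.
have sg : (-1) ^+ j.+1 = - (-1) ^+ j :> R by rewrite exprS mulN1r.
rewrite -sg in eR1 eP1.
have uF1 : Ph j.+1 \in unitmx by apply: (rank_unit jk) eR1.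
have uG : Gam j.+1 \in unitmx.
  by move: uF1; rewrite PhiS !unitmx_mul => /andP[/andP[]].
split; last by [].
split => //.
- exact: orth_step jk' o uG.
- move=> i /andP[i1]; rewrite leq_eqVlt => /orP[/eqP ->|ij]; first by [].
  by apply: HD; rewrite i1.
- move=> i; rewrite leq_eqVlt => /orP[/eqP ->|ij]; first by [].
  exact: HG.
Qed.

Lemma Inv_all j : (j <= k)%N -> Inv j.
Proof.
elim: j => [|j IH] jk; first exact: Inv0.
by case: (Inv_step jk (IH (ltnW jk))).
Qed.

End Lz.

Section Sch.
Variable R : realFieldType.
Variable m : nat.
Variables Gam Om : nat -> 'M[R]_m.
Variable mu : R.

Definition Tb (i j : nat) : 'M[R]_m := Tblk Gam Om i j - (if i == j then mu%:M else 0).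

Lemma diag_blk J (a : R) : (a%:M : 'M[R]_(\sum_(i < J) m)) =
  \mxblock_(i < J, j < J) (if i == j then (a%:M : 'M[R]_m) else 0).
Proof.
rewrite -(mxdiagZ (p_ := fun _ : 'I_J => m)) /mxdiag.
by apply: eq_mxblock => i j; rewrite conform_mx_id.
Qed.

Lemma block_eq J (i l : 'I_J) :
  let N := Tk Gam Om J - mu%:M in N \in unitmx ->
  \sum_(j < J) Tb i j *m submxblock (invmx N) j l = if i == l then 1%:M else 0.
Proof.
move=> N uN.
have NY : N *m invmx N = 1%:M by rewrite mulmxV.
have eN : N = \mxblock_(i < J, j < J) Tb i j.
  by rewrite /N /Tk diag_blk mxblockB.
rewrite -[invmx N]submxblockK {1}eN mul_mxblock (diag_blk J 1) in NY.
have := congr1 (fun M => submxblock M i l) NY.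
by rewrite !mxblockK.
Qed.

Lemma sum_delta J c (F : nat -> 'M[R]_m) :
  \sum_(j < J) (if (j : nat) == c then F j else 0) = if (c < J)%N then F c else 0.
Proof.
rewrite -big_mkcond /=; case: ltnP => cJ.
  by rewrite (big_pred1 (Ordinal cJ)).
by rewrite big_pred0 // => j; apply/negbTE; rewrite neq_ltn (leq_trans (ltn_ord j)).
Qed.

Lemma tri_sum J (y : nat -> 'M[R]_m) (i : nat) : (i < J)%N ->
  \sum_(j < J) Tb i j *m y j =
  (if (0 < i)%N then Gam i *m y i.-1 else 0) + (Om i.+1 - mu%:M) *m y i
  + (if (i.+1 < J)%N then (Gam i.+1)^T *m y i.+1 else 0).
Proof.
move=> iJ.
have pw : forall j : nat, Tb i j *m y j =
   (if j == i then (Om i.+1 - mu%:M) *m y i else 0)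
 + ((if j == i.-1 then (if (0 < i)%N then Gam i *m y j else 0) else 0)
 + (if j == i.+1 then (Gam j)^T *m y j else 0)).
  move=> j; rewrite /Tb /Tblk.
  have [->|nji] := eqVneq j i.
    rewrite ?eqxx (ltn_eqF (ltnSn i)) !addr0.
    by case: i {iJ} => [|i] /=; rewrite ?add0r ?addr0 ?eqxx ?(gtn_eqF (ltnSn i)) ?addr0.
  have nij : i != j by rewrite eq_sym.
  rewrite ?(negPf nij) ?(negPf nji) subr0 add0r.
  have [ij1|nij1] := eqVneq i j.+1.
    by subst i; rewrite eqxx /= (ltn_eqF (ltnW (ltnSn _))) ?ltnS // addr0.
  rewrite ?(negPf nij1).
  have -> : (if j == i.-1 then (if (0 < i)%N then Gam i *m y j else 0) else 0) = 0.
    case: eqP => [ej|] //; case: i {iJ nji nij} nij1 ej => [|i] //= nij1 ej.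
    by rewrite ej eqxx in nij1.
  by rewrite add0r; case: eqP; rewrite ?mul0mx.
under eq_bigr => j _ do rewrite pw.
rewrite !big_split /=.
rewrite (sum_delta J i (fun _ => (Om i.+1 - mu%:M) *m y i)) iJ.
rewrite (sum_delta J i.+1 (fun j => (Gam j)^T *m y j)).
rewrite (sum_delta J i.-1 (fun j => if (0 < i)%N then Gam i *m y j else 0)).
case: i iJ {pw} => [|i] iJ /=; first by rewrite !if_same !add0r.
by rewrite (ltn_trans (ltnSn i) iJ) addrA [X in X + _]addrC.
Qed.

Fixpoint Db j := match j with
  | 0 => 0
  | j'.+1 => if j' is 0 then Om 1 - mu%:M
             else Om j - mu%:M - Gam j' *m invmx (Db j') *m (Gam j')^T
  end.
Lemma DbS j : Db j.+2 = Om j.+2 - mu%:M - Gam j.+1 *m invmx (Db j.+1) *m (Gam j.+1)^T.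
Proof. by []. Qed.
Lemma Db1 : Db 1 = Om 1 - mu%:M. Proof. by []. Qed.

Lemma inv_uniq' (p : nat) (X Y : 'M[R]_p) : X *m Y = 1%:M -> invmx X = Y.
Proof.
move=> XY; have [uX _] := mulmx1_unit XY.
by rewrite -[invmx X]mulmx1 -XY mulmxA mulVmx // mul1mx.
Qed.

Lemma schur J' : (Tk Gam Om J'.+1 - mu%:M) \in unitmx ->
  (forall i, (1 <= i <= J')%N -> Db i \in unitmx) ->
  Db J'.+1 \in unitmx /\
  submxblock (invmx (Tk Gam Om J'.+1 - mu%:M)) ord_max ord_max = invmx (Db J'.+1).
Proof.
set N := Tk Gam Om J'.+1 - mu%:M => uN HD.
pose y i := submxblock (invmx N) (inord i : 'I_J'.+1) ord_max.
have rows : forall i, (i < J'.+1)%N ->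
   (if (0 < i)%N then Gam i *m y i.-1 else 0) + (Om i.+1 - mu%:M) *m y i
  + (if (i.+1 < J'.+1)%N then (Gam i.+1)^T *m y i.+1 else 0) = if i == J' then 1%:M else 0.
  move=> i iJ.
  have := block_eq (inord i) ord_max uN.
  under eq_bigr => j _ do rewrite -[j in submxblock _ j _]inord_val.
  rewrite inordK // -(tri_sum y iJ) => ->.
  by rewrite -val_eqE /= inordK.
have C : forall i, (i < J'.+1)%N ->
   Db i.+1 *m y i + (if (i.+1 < J'.+1)%N then (Gam i.+1)^T *m y i.+1 else 0)
   = if i == J' then 1%:M else 0.
  elim=> [|i IH] iJ.
    by rewrite Db1 -(rows 0%N iJ) add0r.
  have := IH (ltnW iJ); rewrite iJ (ltn_eqF (iJ : (i < J')%N)) => e0.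
  have uDi : Db i.+1 \in unitmx by apply: HD; rewrite /= -ltnS.
  have ey : y i = - (invmx (Db i.+1) *m ((Gam i.+1)^T *m y i.+1)).
    apply/eqP; rewrite -subr_eq0 opprK; apply/eqP.
    by rewrite -[y i](mulKmx uDi) -mulmxDr e0 mulmx0.
  have := rows i.+1 iJ; rewrite [(0 < i.+1)%N]/= ey mulmxN !mulmxA => <-.
  by rewrite DbS mulmxBl; congr (_ + _); rewrite addrC.
have := C J' (ltnSn _); rewrite ltnn eqxx addr0 => e.
have uD : Db J'.+1 \in unitmx by case: (mulmx1_unit e).
split => //.
rewrite (inv_uniq' e) /y; congr submxblock.
by apply: val_inj; rewrite /= inordK.
Qed.
End Sch.

Lemma inv_uniq2 (R : comUnitRingType) p (X Y : 'M[R]_p) : X *m Y = 1%:M -> invmx X = Y.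
Proof.
move=> XY; have [uX _] := mulmx1_unit XY.
by rewrite -[invmx X]mulmx1 -XY mulmxA mulVmx // mul1mx.
Qed.
Lemma invmxM2 (R : comUnitRingType) p (X Y : 'M[R]_p) : X \in unitmx -> Y \in unitmx ->
  invmx (X *m Y) = invmx Y *m invmx X.
Proof.
move=> uX uY; apply: inv_uniq2.
by rewrite mulmxA -(mulmxA X) mulmxV // mulmx1 mulmxV.
Qed.

Lemma core (R : realFieldType) m (mu : R) (D E Db Ph Ph1 G Xi DM1 : 'M[R]_m) :
  D \in unitmx -> E \in unitmx -> Db \in unitmx -> Ph \in unitmx -> Ph1 \in unitmx ->
  DM1 \in unitmx -> D^T = D -> Db = D - E -> Ph1 = G *m invmx D *m Ph ->
  DM1 = mu%:M + G *m (invmx Db - invmx D) *m G^T ->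
  Xi = invmx (Ph^T *m Ph) *m (Ph1^T *m Ph1) ->
  let UM1 := invmx Ph *m invmx E *m Ph in
  let Ups := invmx Ph *m invmx D *m Ph in
  let UM := invmx Ph1 *m invmx DM1 *m Ph1 in
  let M1 := mu *: (UM1 - Ups) + Xi in
  let M2 := mu *: ((Ph^T *m Ph) *m UM1 - (Ph^T *m Ph) *m Ups) + Ph1^T *m Ph1 in
  [/\ M1 \in unitmx, M2 \in unitmx, UM = invmx M1 *m (UM1 - Ups) &
      UM = invmx M2 *m ((Ph^T *m Ph) *m UM1 - (Ph^T *m Ph) *m Ups)].
Proof.
move=> uD uE uDb uF uF1 uM sD eDb eF1 eM eXi UM1 Ups UM M1 M2.
set U := UM1 - Ups.
set K := invmx Ph1 *m DM1 *m Ph1.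
have eU : U = invmx Ph *m (invmx E - invmx D) *m Ph by rewrite /U mulmxBr mulmxBl.
have eED : invmx E - invmx D = invmx E *m Db *m invmx D.
  by rewrite eDb mulmxBr mulmxBl mulVmx // mulmxK // mul1mx.
have uU : U \in unitmx by rewrite eU eED !unitmx_mul !unitmx_inv uF uE uDb uD.
have uK : K \in unitmx by rewrite !unitmx_mul unitmx_inv uF1 uM.
have eG : invmx Ph1 *m G = invmx Ph *m D.
  have -> : G = Ph1 *m invmx Ph *m D by rewrite eF1 (mulmxK uF) (mulmxKV uD).
  by rewrite !mulmxA mulVmx // mul1mx.
have eTri : (invmx E - invmx D) *m D *m (invmx Db - invmx D) = invmx D.
  have eD : D = Db + E by rewrite eDb subrK.
  have h1 : (invmx E - invmx D) *m D = invmx E *m D - 1%:M by rewrite mulmxBl mulVmx.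
  have h2 : invmx E *m D *m invmx Db = invmx E + invmx Db.
    by rewrite eD mulmxDr mulmxDl mulmxK // mulVmx // mul1mx.
  rewrite h1 mulmxBl !mulmxBr h2 mul1mx (mulmxK uD).
  by rewrite mul1mx [invmx E + _]addrC addrK subKr.
have uFt : Ph^T \in unitmx by rewrite unitmx_tr.
have eXi' : Xi = invmx Ph *m invmx D *m G^T *m Ph1.
  rewrite eXi invmxM2 // {1}eF1 !trmx_mul trmx_inv sD !mulmxA.
  by rewrite (mulmxKV uFt).
have hK : K = mu%:M + invmx Ph1 *m G *m (invmx Db - invmx D) *m G^T *m Ph1.
  rewrite /K eM mulmxDr mulmxDl mul_mx_scalar -scalemxAl mulVmx // scalemx1 !mulmxA.
  by [].
have eTri' : invmx Ph *m (invmx E - invmx D) *m D *m (invmx Db - invmx D)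
    = invmx Ph *m invmx D by have := congr1 (mulmx (invmx Ph)) eTri; rewrite !mulmxA.
have eM1 : M1 = U *m K.
  rewrite /M1 hK mulmxDr mul_mx_scalar; congr (_ + _).
  rewrite eXi' !mulmxA -(mulmxA U) eG eU !mulmxA (mulmxK uF).
  by rewrite eTri'.
have uM1 : M1 \in unitmx by rewrite eM1 unitmx_mul uU uK.
have eUM : UM = invmx M1 *m U.
  rewrite eM1 invmxM2 // -mulmxA mulVmx // mulmx1 /K.
  by rewrite !invmxM2 ?unitmx_mul ?unitmx_inv ?uF1 ?uM // invmxK mulmxA.
have uRR : Ph^T *m Ph \in unitmx by rewrite unitmx_mul unitmx_tr uF.
have eM2 : M2 = (Ph^T *m Ph) *m M1.
  by rewrite /M2 /M1 mulmxDr -scalemxAr mulmxBr eXi [Ph^T *m Ph *m (invmx (Ph^T *m Ph) *m _)]mulmxA mulmxV // mul1mx.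
split => //.
- by rewrite eM2 unitmx_mul uRR uM1.
- rewrite eM2 -mulmxBr invmxM2 // -mulmxA (mulKmx uRR).
  exact: eUM.
Qed.


Lemma eig_unit (R : realFieldType) p (g : 'M[R]_p) (a : R) : ~~ eigenvalue g a -> (g - a%:M) \in unitmx.
Proof. by rewrite /eigenvalue /eigenspace negbK kermx_eq0 row_free_unit. Qed.

Lemma Db_all (R : realFieldType) m (Gam Om : nat -> 'M[R]_m) (mu : R) k :
  (forall j, (1 <= j <= k)%N -> (Tk Gam Om j - mu%:M) \in unitmx) ->
  forall j, (1 <= j <= k)%N -> Db Gam Om mu j \in unitmx.
Proof.
move=> Hev.
suff : forall J, (J <= k)%N -> forall i, (1 <= i <= J)%N -> Db Gam Om mu i \in unitmx.
  by move=> H j /andP[j1 jk]; apply: (H k) => //; rewrite j1.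
elim=> [|J IH] Jk i /andP[i1 iJ]; first by move: (leq_trans i1 iJ).
move: iJ; rewrite leq_eqVlt => /orP[/eqP ->|iJ].
  by case: (schur (Hev J.+1 Jk) (IH (ltnW Jk))).
by apply: (IH (ltnW Jk)); rewrite i1.
Qed.

Lemma DMS (R : realFieldType) m (Gam Om : nat -> 'M[R]_m) (mu : R) j :
  DeltaMu Gam Om mu j.+2 = mu%:M + Gam j.+1 *m
    submxblock (invmx (Tk Gam Om j.+1 - mu%:M)) ord_max ord_max *m (Gam j.+1)^T
   - Gam j.+1 *m invmx (Delta Gam Om j.+1) *m (Gam j.+1)^T.
Proof. by []. Qed.

Lemma Db_DM (R : realFieldType) m (Gam Om : nat -> 'M[R]_m) (mu : R) k :
  (forall j, (1 <= j <= k)%N -> (Tk Gam Om j - mu%:M) \in unitmx) ->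
  forall j, (1 <= j <= k)%N ->
  Db Gam Om mu j = Delta Gam Om j - DeltaMu Gam Om mu j.
Proof.
move=> Hev [|[|j]] // /andP[_ jk].
have Hd := Db_all Hev.
rewrite DbS DeltaS DMS.
have [_ ->] := schur (Hev j.+1 (ltnW jk)) (fun i hi => Hd i
   (let: conj a b := andP hi in introT andP (conj a (leq_trans b (ltnW (ltnW jk)))))).
set X := Gam j.+1 *m invmx (Db Gam Om mu j.+1) *m (Gam j.+1)^T.
set Y := Gam j.+1 *m invmx (Delta Gam Om j.+1) *m (Gam j.+1)^T.
by rewrite opprB addrA subrK opprD addrA.
Qed.

Lemma RtR (R : realFieldType) n m (Rm V : 'M[R]_(n, m)) (F : 'M[R]_m) (s : R) :
  s * s = 1 -> V^T *m V = 1%:M -> Rm = s *: (V *m F) -> Rm^T *m Rm = F^T *m F.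
Proof.
move=> ss VV ->; rewrite sgn_tr // trmx_mul -mulmxA (mulmxA V^T) VV mul1mx //.
Qed.

Unset Implicit Arguments.
Theorem theorem5 (R : realFieldType) (n m k : nat)
  (A : 'M[R]_n) (B X0 : 'M[R]_(n, m))
  (V : nat -> 'M[R]_(n, m)) (Gam Om : nat -> 'M[R]_m) (mu : R) :
  (1 <= k)%N ->
  sym_posdef A ->
  (* block Lanczos started from R_0 = B - A X_0 *)
  lanczos_upto A V Gam Om (bcgR A B X0 0) k ->
  (* standing assumption: the block Krylov spaces have full dimension *)
  (forall j, (j <= k.+1)%N -> \rank (krylov A (bcgR A B X0 0) j) = (j * m)%N) ->
  (* R_0, ..., R_k have full column rank *)
  (forall j, (j <= k)%N -> \rank (bcgR A B X0 j) = m) ->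
  (* mu is not an eigenvalue of T_1, ..., T_k *)
  (forall j, (1 <= j <= k)%N -> ~~ eigenvalue (Tk Gam Om j) mu) ->
  (* Delta^{(mu)}_1, ..., Delta^{(mu)}_{k+1} are nonsingular *)
  (forall j, (1 <= j <= k.+1)%N -> DeltaMu Gam Om mu j \in unitmx) ->
  let UM := UpsMu Gam Om mu in
  let TM := ThetaMu A B X0 Gam Om mu in
  let M1 := mu *: (UM k.-1 - bcgUps A B X0 k.-1) + bcgXi A B X0 k in
  let M2 := mu *: (TM k.-1 - bcgTheta A B X0 k.-1)
            + (bcgR A B X0 k)^T *m bcgR A B X0 k in
  [/\ UM 0%N = mu^-1%:M,
      M1 \in unitmx, M2 \in unitmx,
      UM k = invmx M1 *m (UM k.-1 - bcgUps A B X0 k.-1) &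
      UM k = invmx M2 *m (TM k.-1 - bcgTheta A B X0 k.-1)].
Proof.
move=> k1 [Asym Apd] LZ _ Hrank Hev HDM.
have Hev' : forall j, (1 <= j <= k)%N -> (Tk Gam Om j - mu%:M) \in unitmx.
  by move=> j /Hev /eig_unit.
case: k k1 LZ Hrank Hev Hev' HDM => [|k'] // _ LZ Hrank _ Hev' HDM.
have [o HD HG eRk ePk] := Inv_all Asym Apd Hrank LZ (leqnn k'.+1).
have [_ _ _ eRk' _] := Inv_all Asym Apd Hrank LZ (leqnSn k').
have [_ [eU eX uF]] := Inv_step Asym Apd Hrank LZ (ltnSn k')
   (Inv_all Asym Apd Hrank LZ (leqnSn k')).
have uF1 : Phi Gam Om k'.+1 \in unitmx := rank_unit Hrank (leqnn _) eRk.
have [sD uD] := HD k'.+1 (leqnn _).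
have uE := HDM k'.+1 (leqnSn _).
have uDM := HDM k'.+2 (leqnn _).
have HDb := Db_all Hev'.
have uDb := HDb k'.+1 (leqnn _).
have eDb := Db_DM Hev' (j:=k'.+1) (leqnn _).
have eDM : DeltaMu Gam Om mu k'.+2 = mu%:M +
    Gam k'.+1 *m (invmx (Db Gam Om mu k'.+1) - invmx (Delta Gam Om k'.+1)) *m (Gam k'.+1)^T.
  rewrite DMS.
  have [_ ->] := schur (Hev' k'.+1 (leqnn _)) (fun i hi => HDb i
   (let: conj a b := andP hi in introT andP (conj a (leq_trans b (leqnSn _))))).
  by rewrite mulmxBr mulmxBl addrA.
have [hc1 hc2 hc3 hc4] := core uD uE uDb uF uF1 uDM sD eDb (PhiS Gam Om k') eDM eX.
have VV1 : (V k'.+1)^T *m V k'.+1 = 1%:M by rewrite o ?eqxx ?leqnSn.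
have VV2 : (V k'.+2)^T *m V k'.+2 = 1%:M by rewrite o ?eqxx ?leqnn.
have RR := RtR (sgn2 _ _) VV1 eRk'.
have RR1 := RtR (sgn2 _ _) VV2 eRk.
rewrite /ThetaMu /bcgTheta eU RR RR1.
split => //.
rewrite /UpsMu invmx_scalar mul_mx_scalar -scalemxAl mulVmx ?scalemx1 //.
exact: HG.
Qed.
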